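(* Let $(\mathbb X,S)$ be a minimal subshift over a finite alphabet $\mathcal A$ satisfying the Boshernitzan condition, and let $m\in\mathbb N$. Then each $S^m$-minimal component $\mathbb X_j$ of $\mathbb X$, viewed via the conjugacy $x\mapsto (x_{[km,(k+1)m-1]})_{k\in\mathbb Z}$ as a subshift (with the left shift, corresponding to $S^m$) over the alphabet $\mathcal L_m(\mathbb X)$, satisfies the Boshernitzan condition.
   Context: $\mathcal L_m(\mathbb X)$ is the set of words of length $m$ occurring in elements of $\mathbb X$, and $x_{[j,k]}=x_j\cdots x_k$. An $S^m$-minimal component is a nonempty closed $S^m$-invariant subset minimal with these properties. Boshernitzan condition for a minimal subshift $\mathbb Y$: there is a shift-invariant probability measure $\nu$ with $\limsup_{n}n\min\{\nu[u]:u\in\mathcal L_n(\mathbb Y)\}>0$, where $[u]$ is the cylinder set of $u$ at position $0$. *)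

(* Defs.v *)
From HB Require Import structures.
From mathcomp Require Import all_boot all_order all_algebra.
From mathcomp Require Import all_classical all_reals all_analysis.
Set Implicit Arguments. Unset Strict Implicit. Unset Printing Implicit Defensive.
Import Order.TTheory GRing.Theory Num.Theory.
Local Open Scope classical_set_scope.
Local Open Scope ring_scope.

Definition sshift {A : Type} (x : int -> A) : int -> A := fun k => x (k + 1).

Definition window {A : finType} (n : nat) (x : int -> A) (k : int) : n.-tuple A :=
  [tuple x (k + (val i)%:Z) | i < n].

(* Closedness in the product topology (A discrete): a point all of whose
   central windows x_{[-n,n]} agree with some point of Z lies in Z. *)
Definition seq_closed {A : Type} (Z : set (int -> A)) : Prop :=
  forall x : int -> A,
    (forall n : nat, exists y, Z y /\
        forall i : int, - (n%:Z) <= i <= n%:Z -> x i = y i) -> Z x.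

Definition closed_invariant {A : Type} (f : (int -> A) -> (int -> A))
  (Z : set (int -> A)) : Prop :=
  Z !=set0 /\ seq_closed Z /\ f @` Z = Z.

Definition subshift {A : Type} (X : set (int -> A)) : Prop :=
  closed_invariant sshift X.

Definition minimal_component {A : Type} (f : (int -> A) -> (int -> A))
  (X Z : set (int -> A)) : Prop :=
  Z `<=` X /\ closed_invariant f Z /\
  forall W, W `<=` Z -> closed_invariant f W -> W = Z.

Definition minimal_subshift {A : Type} (X : set (int -> A)) : Prop :=
  subshift X /\ forall W, W `<=` X -> subshift W -> W = X.

Definition language {A : finType} (Y : set (int -> A)) (n : nat)
  : set (n.-tuple A) :=
  [set u | exists2 y, Y y & exists k : int, window n y k = u].

(* Type of sequences, pointed by a letter a (needed for the measurable space). *)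
Definition pseq (A : finType) (a : A) := int -> A.
HB.instance Definition _ (A : finType) (a : A) := gen_eqMixin (pseq a).
HB.instance Definition _ (A : finType) (a : A) := gen_choiceMixin (pseq a).
HB.instance Definition _ (A : finType) (a : A) :=
  isPointed.Build (pseq a) (fun _ => a).

(* Cylinder sets (at every position); they generate the Borel
   sigma-algebra of the product topology. *)
Definition cylinders (A : finType) (a : A) : set (set (pseq a)) :=
  [set C | exists (n : nat) (u : n.-tuple A) (k : int),
           C = [set x : pseq a | window n x k = u]].

Definition seqspace (A : finType) (a : A) := g_sigma_algebraType (@cylinders A a).

Definition cyl (A : finType) (a : A) (n : nat) (u : n.-tuple A)
  : set (seqspace a) := [set x | window n x 0 = u].

Definition boshernitzan (R : realType) (A : finType) (Y : set (int -> A)) : Prop :=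
  exists (a : A) (nu : probability (seqspace a) R),
    nu Y = 1%E /\
    (forall B : set (seqspace a), measurable B ->
        nu (@sshift A @^-1` B) = nu B) /\
    (0 < limn_esup (fun n : nat =>
        (n%:R)%:E * ereal_inf [set nu (@cyl A a n u) | u in @language A Y n]))%E.

Definition mblock {A : finType} (m : nat) (x : int -> A) : int -> m.-tuple A :=
  fun k => window m x (k * m%:Z).

(* Main.v *)
Require Import Defs.
From HB Require Import structures.
From mathcomp Require Import all_boot all_order all_algebra.
From mathcomp Require Import all_classical all_reals all_analysis.
From mathcomp Require Import zify ring lra.
Import Order.TTheory GRing.Theory Num.Theory.
Local Open Scope classical_set_scope.
Local Open Scope ring_scope.

Definition sh {B : Type} (t : int) (x : int -> B) : int -> B := fun k => x (k + t).
Definition agree {B : Type} (n : nat) (x y : int -> B) :=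
  forall i : int, - (n%:Z) <= i <= n%:Z -> x i = y i.

Lemma agree_mono B n N (x y : int -> B) : (n <= N)%N -> agree N x y -> agree n x y.
Proof. by move=> nN h i hi; apply: h; lia. Qed.

Lemma shS B s t (x : int -> B) : sh s (sh t x) = sh (s + t) x.
Proof. by apply/funext => k; rewrite /sh addrA. Qed.

Lemma sh0 B (x : int -> B) : sh 0 x = x.
Proof. by apply/funext => k; rewrite /sh addr0. Qed.

Lemma sh_inj B t (x y : int -> B) : sh t x = sh t y -> x = y.
Proof.
move=> e; apply/funext => k; have := congr1 (fun f => f (k - t)) e.
by rewrite /sh subrK.
Qed.

Lemma iter_sshift B n : iter n (@sshift B) = sh n%:Z.
Proof.
apply/funext => x; elim: n => [|n IH] /=; first by rewrite sh0.
rewrite IH; apply/funext => k; rewrite /sshift /sh; congr (x _); lia.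
Qed.

Definition inv {B : Type} (t : int) (Z : set (int -> B)) :=
  forall x, Z (sh t x) <-> Z x.

Lemma img_inv B t (Z : set (int -> B)) : sh t @` Z = Z -> inv t Z.
Proof.
move=> H x; split => h.
  by move: h; rewrite -{1}H => -[y Zy /sh_inj <-].
by rewrite -H; exists x.
Qed.

Lemma inv_img B t (Z : set (int -> B)) : inv t Z -> sh t @` Z = Z.
Proof.
move=> H; apply/seteqP; split => x.
  by move=> [y Zy <-]; apply/H.
move=> Zx; exists (sh (- t) x); last by rewrite shS subrr sh0.
by apply/H; rewrite shS subrr sh0.
Qed.

Lemma inv0 B (Z : set (int -> B)) : inv 0 Z.
Proof. by move=> x; rewrite sh0. Qed.

Lemma inv_neg B t (Z : set (int -> B)) : inv t Z -> inv (- t) Z.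
Proof.
move=> H x; split => h.
  by have := (H (sh (- t) x)).2 h; rewrite shS subrr sh0.
by apply/H; rewrite shS subrr sh0.
Qed.

Lemma inv_add B s t (Z : set (int -> B)) : inv s Z -> inv t Z -> inv (s + t) Z.
Proof.
move=> Hs Ht x; rewrite -shS; split.
  by move=> h; apply/(Ht x); apply/(Hs (sh t x)).
by move=> h; apply/(Hs (sh t x)); apply/(Ht x).
Qed.

Lemma inv_mul B t (Z : set (int -> B)) (k : int) : inv t Z -> inv (k * t) Z.
Proof.
move=> H.
have P (n : nat) : inv (n%:Z * t) Z.
  elim: n => [|n IH]; first by rewrite mul0r; exact: inv0.
  have -> : n.+1%:Z * t = n%:Z * t + t by rewrite -[n.+1]addn1 PoszD mulrDl mul1r.
  exact: inv_add.
case: k => n; first exact: P.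
by rewrite NegzE mulNr; apply: inv_neg; exact: P.
Qed.

Lemma closed_set0 B : seq_closed (@set0 (int -> B)).
Proof. by move=> x /(_ 0%N) [y [[]]]. Qed.

Lemma closed_sh B (Z : set (int -> B)) t :
  seq_closed Z -> seq_closed (sh t @^-1` Z).
Proof.
move=> cZ x hx; rewrite /preimage /=; apply: cZ => n.
have [y [Zy ag]] := hx (n + `|t|)%N.
exists (sh t y); split => // i hi; rewrite /sh; apply: ag; lia.
Qed.

Lemma closedI B (Z1 Z2 : set (int -> B)) :
  seq_closed Z1 -> seq_closed Z2 -> seq_closed (Z1 `&` Z2).
Proof.
move=> c1 c2 x hx; split.
  by apply: c1 => n; have [y [[Zy _] ag]] := hx n; exists y.
by apply: c2 => n; have [y [[_ Zy] ag]] := hx n; exists y.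
Qed.

Lemma closed_bigU B (I : finType) (F : I -> set (int -> B)) :
  (forall i, seq_closed (F i)) -> seq_closed [set x | exists i, F i x].
Proof.
move=> cF x hx; apply: contrapT => nx.
have h : forall i, exists n : nat, forall y, F i y -> ~ agree n x y.
  move=> i; apply: contrapT => hn; apply: nx; exists i; apply: cF => n.
  apply: contrapT => hn2; apply: hn; exists n => y Fy ag; apply: hn2.
  by exists y.
have [f hf] := choice h.
have [y [[i Fiy] ag]] := hx (\max_i f i)%N.
by apply: (hf i y Fiy); apply: agree_mono ag; exact: leq_bigmax.
Qed.

Lemma pigeon (F : finType) (R : nat -> Prop) (e : nat -> F) :
  (forall K, exists L, (K <= L)%N /\ R L) ->
  exists f, forall K, exists L, (K <= L)%N /\ R L /\ e L = f.
Proof.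
move=> h; apply: contrapT => nf.
have h2 : forall f, exists K : nat, forall L, (K <= L)%N -> R L -> e L <> f.
  move=> f; apply: contrapT => hn; apply: nf; exists f => K.
  apply: contrapT => hn2; apply: hn; exists K => L KL RL efL; apply: hn2.
  by exists L.
have [g hg] := choice h2.
have [L [KL RL]] := h (\max_f g f)%N.
apply: (hg (e L) L _ RL erefl).
apply: leq_trans KL; exact: leq_bigmax.
Qed.

Lemma compact_meet (A : finType) (K Z : set (int -> A)) :
  seq_closed K -> seq_closed Z ->
  (forall L : nat, exists x y, K x /\ Z y /\ agree L x y) -> exists z, K z /\ Z z.
Proof.
move=> cK cZ h.
have h' : forall L : nat, exists p : (int -> A) * (int -> A),
    K p.1 /\ Z p.2 /\ agree L p.1 p.2.
  by move=> L; have [x [y ?]] := h L; exists (x, y).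
have [f hf] := choice h'.
pose Q (n : nat) (z : int -> A) :=
  forall K0 : nat, exists L, (K0 <= L)%N /\ agree n (f L).1 z.
have base : exists z, Q 0%N z.
  have [a ha] := @pigeon A (fun _ => True) (fun L => (f L).1 0)
    (fun K0 => ex_intro _ K0 (conj (leqnn _) I)).
  exists (fun _ => a) => K0; have [L [KL [_ eL]]] := ha K0.
  by exists L; split => // i hi; have -> : i = 0 by lia.
have step : forall n z, Q n z -> exists z', agree n z z' /\ Q n.+1 z'.
  move=> n z Qz.
  have [p hp] := @pigeon (A * A)%type (fun L => agree n (f L).1 z)
    (fun L => ((f L).1 (- (n.+1%:Z)), (f L).1 (n.+1%:Z))) Qz.
  exists (fun i => if i == - (n.+1%:Z) then p.1 else if i == n.+1%:Z then p.2
                  else z i); split.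
    move=> i hi /=; rewrite ifF; last by apply/eqP; lia.
    by rewrite ifF //; apply/eqP; lia.
  move=> K0; have [L [KL [ag eL]]] := hp K0; exists L; split => // i hi /=.
  case: eqP => [->|ne1]; first by rewrite -eL.
  case: eqP => [->|ne2]; first by rewrite -eL.
  by apply: ag; lia.
have step' : forall nz : nat * (int -> A),
    exists z', Q nz.1 nz.2 -> agree nz.1 nz.2 z' /\ Q nz.1.+1 z'.
  move=> [n z]; case: (pselect (Q n z)) => [q|nq].
    by have [z' ?] := step n z q; exists z'.
  by exists z.
have [st hst] := choice step'.
have [z0 Qz0] := base.
pose zs := fix zs (n : nat) := if n is k.+1 then st (k, zs k) else z0.
have Qzs n : Q n (zs n).
  by elim: n => [|n IH] //=; have [] := hst (n, zs n) IH.
have agS n : agree n (zs n) (zs n.+1).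
  by have [] := hst (n, zs n) (Qzs n).
have agk n k : (n <= k)%N -> agree n (zs n) (zs k).
  elim: k => [|k IH] nk.
    by have -> : n = 0%N by lia.
  have [->|nk1] := eqVneq n k.+1; first by move=> i.
  move=> i hi; rewrite (IH _ i hi); last by lia.
  by apply: (agS k); lia.
pose zl := fun i : int => zs `|i|%N i.
have agl (p : nat) : agree p (zs p) zl.
  move=> i hi; rewrite /zl; symmetry; apply: agk; [lia|lia].
exists zl; split.
  apply: cK => n; have [L [_ ag]] := Qzs n 0%N; exists (f L).1; split.
    by have [] := hf L.
  by move=> i hi; rewrite -(agl n i hi) -(ag i hi).
apply: cZ => n; have [L [nL ag]] := Qzs n n; exists (f L).2; split.
  by have [_ []] := hf L.
move=> i hi; rewrite -(agl n i hi) -(ag i hi).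
have [_ [_ agL]] := hf L; apply: agL; lia.
Qed.
Set Implicit Arguments. Unset Strict Implicit.

Lemma invX (A : finType) (X : set (int -> A)) :
  minimal_subshift X -> forall t, inv t X.
Proof.
move=> [[_ [_ hX]] _] t.
have h1 : inv 1 X by exact: img_inv hX.
by have := @inv_mul _ 1 X t h1; rewrite mulr1.
Qed.

Lemma invXj (A : finType) (X Xj : set (int -> A)) m :
  minimal_component (iter m sshift) X Xj -> forall k : int, inv (k * m%:Z) Xj.
Proof.
move=> [_ [[_ [_ h]] _]] k; rewrite iter_sshift in h.
by apply: inv_mul; exact: img_inv.
Qed.

Lemma dich (A : finType) (X Xj : set (int -> A)) m :
  minimal_component (iter m sshift) X Xj -> forall i : int,
  (exists z, Xj (sh i z) /\ Xj z) -> forall x, Xj x -> Xj (sh i x).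
Proof.
move=> mc i [z [z1 z2]] x Xjx.
have [XjX [[ne [cl h]] mn]] := mc.
have inm := invXj mc 1; rewrite mul1r in inm.
suff e : sh i @^-1` Xj `&` Xj = Xj.
  by move: Xjx; rewrite -{1}e => -[].
apply: mn; first by move=> y [].
split; first by exists z.
split; first by apply: closedI; [exact: closed_sh|exact: cl].
rewrite iter_sshift; apply: inv_img => y /=.
by rewrite shS addrC -shS (inm (sh i y)) (inm y).
Qed.

Lemma dich2 (A : finType) (X Xj : set (int -> A)) m :
  minimal_component (iter m sshift) X Xj -> forall i : int,
  (forall x, Xj x -> Xj (sh i x)) -> forall x, Xj (sh i x) -> Xj x.
Proof.
move=> mc i h.
have [_ [[[x0 Xx0] _] _]] := mc.
have h2 := dich mc (i := - i).
have : forall x, Xj x -> Xj (sh (- i) x).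
  apply: h2; exists (sh i x0); split; last exact: h.
  by rewrite shS addNr sh0.
by move=> h3 x /h3; rewrite shS addNr sh0.
Qed.

Lemma cover (A : finType) (X Xj : set (int -> A)) m : (0 < m)%N ->
  minimal_subshift X -> minimal_component (iter m sshift) X Xj ->
  forall x, X x -> exists k : 'I_m, Xj (sh (nat_of_ord k)%:Z x).
Proof.
move=> m0 mX mc.
have [XjX [[[x0 Xx0] [cl h]] mn]] := mc.
have iX := invX mX.
have inm := invXj mc 1; rewrite mul1r in inm.
pose U := [set x | exists k : 'I_m, Xj (sh (nat_of_ord k)%:Z x)].
have UX : U `<=` X.
  by move=> x [k /XjX /iX].
have e : U = X.
  apply: mX.2 => //; split; first by exists x0; exists (Ordinal m0); rewrite sh0.
  split; first by apply: closed_bigU => k; exact: closed_sh.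
  change (sh 1 @` U = U); apply: inv_img => x; split.
    move=> [k]; rewrite shS => hk.
    have [km|km] := ltnP k.+1 m.
      by exists (Ordinal km) => /=; have -> : k.+1%:Z = k%:Z + 1 by lia.
    exists (Ordinal m0); rewrite sh0; apply/inm.
    by move: (ltn_ord k) => kl; have -> : m%:Z = k%:Z + 1 by lia.
  move=> [k hk].
  have [k0|kpos] := eqVneq (nat_of_ord k) 0%N.
    have mk : (m.-1 < m)%N by lia.
    exists (Ordinal mk); rewrite shS /=.
    have -> : m.-1%:Z + 1 = m%:Z by lia.
    by apply/inm; move: hk; rewrite k0 sh0.
  have mk : (k.-1 < m)%N by move: (ltn_ord k) => kl; lia.
  exists (Ordinal mk); rewrite shS /=.
  by have -> : k.-1%:Z + 1 = k%:Z by lia.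
by move=> x; rewrite -e.
Qed.

Lemma closed_compl (A : finType) (X Xj : set (int -> A)) m : (0 < m)%N ->
  minimal_subshift X -> minimal_component (iter m sshift) X Xj ->
  seq_closed (X `\` Xj).
Proof.
move=> m0 mX mc.
have [XjX [[_ [cl _]] _]] := mc.
have iX := invX mX.
have -> : X `\` Xj = [set x | exists k : 'I_m, (sh (nat_of_ord k)%:Z @^-1` Xj `\` Xj) x].
  apply/seteqP; split => x.
    by move=> [Xx nx]; have [k hk] := cover m0 mX mc Xx; exists k.
  by move=> [k [hk nx]]; split => //; apply/(iX k); exact: XjX.
apply: closed_bigU => k.
case: (pselect (exists z, Xj (sh (nat_of_ord k)%:Z z) /\ Xj z)) => hz.
  have h1 := dich mc hz; have h2 := dich2 mc h1.
  rewrite (_ : _ `\` _ = set0); first exact: closed_set0.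
  by apply/seteqP; split => x // [/h2].
rewrite (_ : _ `\` _ = sh (nat_of_ord k)%:Z @^-1` Xj); first exact: closed_sh.
apply/seteqP; split => x; first by case.
by move=> hx; split => // Xjx; apply: hz; exists x.
Qed.

Lemma clopen (A : finType) (X Xj : set (int -> A)) m : (0 < m)%N ->
  minimal_subshift X -> minimal_component (iter m sshift) X Xj ->
  exists L : nat, forall x y, X x -> Xj y -> agree L x y -> Xj x.
Proof.
move=> m0 mX mc.
have [XjX [[_ [cl _]] _]] := mc.
apply: contrapT => h.
have : forall L : nat, exists x y, (X `\` Xj) x /\ Xj y /\ agree L x y.
  move=> L; apply: contrapT => h2; apply: h; exists L => x y Xx Xjy ag.
  by apply: contrapT => nx; apply: h2; exists x, y.
move=> /(@compact_meet _ _ _ (closed_compl m0 mX mc) cl) [z [[_ nz] zj]].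
exact: nz.
Qed.

Definition pfr d d' (T1 : measurableType d) (T2 : measurableType d') (R : realType)
  (nu : {measure set T1 -> \bar R}) (D : set T1) (mD : measurable D)
  (f : T1 -> T2) (mf : measurable_fun setT f) : set T2 -> \bar R :=
  fun U => nu (f @^-1` U `&` D).

Section pfr_measure.
Context d d' (T1 : measurableType d) (T2 : measurableType d') (R : realType).
Variables (nu : {measure set T1 -> \bar R}) (D : set T1) (mD : measurable D)
  (f : T1 -> T2) (mf : measurable_fun setT f).

Let pfr0 : pfr nu mD mf set0 = 0%E.
Proof. by rewrite /pfr preimage_set0 set0I measure0. Qed.

Let mpre A : measurable A -> measurable (f @^-1` A `&` D).
Proof. by move=> mA; apply: measurableI => //; rewrite -[X in measurable X]setTI; exact: mf. Qed.

Let pfr_ge0 A : (0 <= pfr nu mD mf A)%E.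
Proof. by apply: measure_ge0. Qed.

Let pfr_sigma_additive : semi_sigma_additive (pfr nu mD mf).
Proof.
move=> F mF tF mUF; rewrite /pfr preimage_bigcup setI_bigcupl.
apply: measure_sigma_additive => [i|]; first exact: mpre.
apply/trivIsetP => i j _ _ ij; rewrite setIACA setIid -preimage_setI.
by move/trivIsetP : tF => /(_ _ _ Logic.I Logic.I ij) ->; rewrite preimage_set0 set0I.
Qed.

HB.instance Definition _ := isMeasure.Build _ _ _
  (pfr nu mD mf) pfr0 pfr_ge0 pfr_sigma_additive.
End pfr_measure.

Lemma window_sh (A : finType) n (x : int -> A) t k :
  window n (sh t x) k = window n x (k + t).
Proof.
by apply: eq_from_tnth => i; rewrite !tnth_mktuple /sh; congr (x _); lia.
Qed.

Lemma window_agree (A : finType) N (x y : int -> A) k k' :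
  window N x k = window N y k' -> forall i : int, k <= i < k + N%:Z ->
  x i = y (i - k + k').
Proof.
move=> e i hi; have jN : (`|i - k| < N)%N by lia.
have := congr1 (fun t => tnth t (Ordinal jN)) e; rewrite !tnth_mktuple /=.
have -> : k + `|i - k|%N%:Z = i by lia.
by have -> : k' + `|i - k|%N%:Z = i - k + k' by lia.
Qed.

Lemma agree_window (A : finType) N (x y : int -> A) k k' :
  (forall i : int, k <= i < k + N%:Z -> x i = y (i - k + k')) ->
  window N x k = window N y k'.
Proof.
move=> h; apply: eq_from_tnth => j; rewrite !tnth_mktuple.
case: j => j jN /=.
by rewrite h; [congr (y _); lia | lia].
Qed.

Lemma meas_cyl (A : finType) (a : A) n (u : n.-tuple A) k :
  measurable ([set x : seqspace a | window n x k = u]).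
Proof. by apply: sub_sigma_algebra; exists n, u, k. Qed.

Lemma meas_by_cyl (A B : finType) (a : A) (b : B) (f : seqspace a -> seqspace b) :
  (forall n (u : n.-tuple B) k,
     measurable (f @^-1` [set x : seqspace b | window n x k = u])) ->
  measurable_fun setT f.
Proof.
move=> h.
apply: (@measurability _ _ (seqspace a) (seqspace b) setT f
   (@cylinders B b : set (set (seqspace b)))) => //.
by move=> _ [_ [n [u [k ->]]] <-]; rewrite setTI; exact: h.
Qed.

Lemma meas_sh (A : finType) (a : A) (t : int) :
  measurable_fun setT (sh t : seqspace a -> seqspace a).
Proof.
apply: meas_by_cyl => n u k.
rewrite (_ : _ @^-1` _ = [set x : seqspace a | window n x (k + t) = u]).
  exact: meas_cyl.
by apply/seteqP; split => x /=; rewrite window_sh.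
Qed.

Lemma meas_closed (A : finType) (a : A) (Z : set (seqspace a)) :
  seq_closed Z -> measurable Z.
Proof.
move=> cl.
pose F (n : nat) (u : (n.*2.+1).-tuple A) : set (seqspace a) :=
  if `[< exists y, Z y /\ window n.*2.+1 y (- n%:Z) = u >]
  then [set x | window n.*2.+1 x (- n%:Z) = u] else set0.
rewrite (_ : Z = \bigcap_(n : nat) \bigcup_(u : (n.*2.+1).-tuple A) F n u).
  apply: bigcapT_measurable => n.
  apply: countable_bigcupT_measurable; first exact: finite_set_countable.
  by move=> u; rewrite /F; case: ifP => _ //; exact: meas_cyl.
apply/seteqP; split => x.
  move=> Zx n _; exists (window n.*2.+1 x (- n%:Z)) => //.
  by rewrite /F ifT //; apply/asboolP; exists x.
move=> hx; apply: cl => n.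
have [u _] := hx n Logic.I; rewrite /F; case: asboolP => //.
move=> [y [Zy wy]] wx; exists y; split => // i hi.
have := window_agree (etrans wx (esym wy)) (i := i).
by rewrite subrK; apply; lia.
Qed.

Lemma inv_nu (R : realType) (A : finType) (a : A)
  (nu : {measure set (seqspace a) -> \bar R}) :
  (forall B : set (seqspace a), measurable B -> nu (@sshift A @^-1` B) = nu B) ->
  forall (n : nat) (B : set (seqspace a)), measurable B -> nu (sh n%:Z @^-1` B) = nu B.
Proof.
move=> H; elim=> [|n IH] B mB.
  by congr (nu _); apply/seteqP; split => x; rewrite /preimage /= sh0.
have -> : sh n.+1%:Z @^-1` B = @sshift A @^-1` (sh n%:Z @^-1` B).
  apply/seteqP; split => x; rewrite /preimage /=.
    by rewrite (_ : sshift x = sh 1 x) // shS; have -> : n%:Z + 1 = n.+1%:Z by lia.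
  by rewrite (_ : sshift x = sh 1 x) // shS; have -> : n%:Z + 1 = n.+1%:Z by lia.
rewrite H ?IH //.
by have := @meas_sh A a n%:Z measurableT _ mB; rewrite setTI.
Qed.

Lemma mblock_sh (A : finType) m (x : int -> A) (k : int) :
  mblock m (sh (k * m%:Z) x) = sh k (mblock m x).
Proof.
apply/funext => j; rewrite /mblock /sh window_sh; congr (window _ _ _).
by rewrite mulrDl.
Qed.

Lemma mblock_sh1 (A : finType) m (x : int -> A) :
  mblock m (sh m%:Z x) = sshift (mblock m x).
Proof. by have := mblock_sh m x 1; rewrite mul1r. Qed.

Lemma meas_mblock (A : finType) (a : A) m (a' : m.-tuple A) :
  measurable_fun setT (mblock m : seqspace a -> seqspace a').
Proof.
apply: meas_by_cyl => n w k.
pose E (j : nat) : set (seqspace a) := if (j < n)%N then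
  [set x : seqspace a | window m x ((k + j%:Z) * m%:Z) = nth a' w j] else setT.
rewrite (_ : _ @^-1` _ = \bigcap_(j : nat) E j).
  apply: bigcapT_measurable => j; rewrite /E; case: ifP => _.
    exact: meas_cyl.
  exact: measurableT.
apply/seteqP; split => x /=.
  move=> e j _; rewrite /E; case: ifP => jn //.
  have := congr1 (fun t => tnth t (Ordinal jn)) e.
  by rewrite tnth_mktuple (tnth_nth a').
move=> h; apply: eq_from_tnth => j; rewrite tnth_mktuple (tnth_nth a').
by have := h j Logic.I; rewrite /E ifT.
Qed.

Lemma limn_esupE (R : realType) (u : (\bar R)^nat) :
  limn_esup u = ereal_inf (range (esups u)).
Proof. by rewrite limn_esup_lim; apply/cvg_lim => //; exact: cvg_esups_inf. Qed.

Lemma limsup_pos_ex (R : realType) (u : (\bar R)^nat) :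
  (0 < limn_esup u)%E -> exists2 eps : R, 0 < eps &
    forall K : nat, exists2 N : nat, (K <= N)%N & (eps%:E < u N)%E.
Proof.
move=> pos.
have [eps e0 epsl] : exists2 eps : R, 0 < eps & (eps%:E < limn_esup u)%E.
  move: pos; case: (limn_esup u) => [r| |] // r0.
    rewrite lte_fin in r0; exists (r / 2); first lra.
    by rewrite lte_fin; lra.
  by exists 1 => //; rewrite ltry.
exists eps => // K.
have : (eps%:E < esups u K)%E.
  apply: (lt_le_trans epsl); rewrite limn_esupE.
  by apply: ereal_inf_lbound; exists K.
rewrite /esups /= => /ereal_sup_gt [_ [N KN <-] h].
by exists N.
Qed.

Lemma limsup_pos_of (R : realType) (v : (\bar R)^nat) (eps : R) : 0 < eps ->
  (forall K : nat, exists2 n : nat, (K <= n)%N & (eps%:E <= v n)%E) ->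
  (0 < limn_esup v)%E.
Proof.
move=> e0 h; rewrite limn_esupE.
apply: (@lt_le_trans _ _ eps%:E); first by rewrite lte_fin.
apply: le_ereal_inf_tmp => _ [K _ <-].
have [n Kn hn] := h K.
apply: (le_trans hn); apply: ereal_sup_ubound; by exists n.
Qed.

Lemma transfer (R : realType) (I J : nat -> \bar R) (m c : nat) : (0 < m)%N ->
  (forall N, (0 <= I N)%E) -> (forall N N', (N <= N')%N -> (I N' <= I N)%E) ->
  (forall n : nat, (n%:R%:E * I (n * m + c)%N <= J n)%E) ->
  (0 < limn_esup (fun N : nat => N%:R%:E * I N))%E -> (0 < limn_esup J)%E.
Proof.
move=> m0 I0 Imono hJ /limsup_pos_ex [eps e0 heps].
have m0' : (0 < m%:R :> R) by rewrite ltr0n.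
apply: (@limsup_pos_of _ _ (eps / (2 * m%:R))).
  by apply: divr_gt0 => //; rewrite mulr_gt0.
move=> K; have [N KN hN] := heps (2 * m * K.+1 + 2 * (c + m))%N.
pose n := ((N - c) %/ m)%N.
have h1 : (n * m <= N - c)%N by apply: leq_trunc_div.
have h2 : (N - c < n.+1 * m)%N by apply: ltn_ceil.
have Kn : (K < n)%N by nia.
have nmN : (n * m + c <= N)%N by lia.
have N2 : (N <= 2 * m * n)%N by nia.
exists n; first exact: ltnW.
apply: (le_trans _ (hJ n)).
apply: (@le_trans _ _ ((n%:R : R)%:E * I N)%E); last first.
  by apply: lee_wpmul2l; [rewrite lee_fin ler0n | exact: Imono].
move: hN (I0 N); case: (I N) => [r| |] //.
  rewrite -!EFinM !lee_fin lte_fin => hN r0.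
  have hN2 : N%:R * r <= (2 * m * n)%:R * r by apply: ler_wpM2r => //; rewrite ler_nat.
  rewrite ler_pdivrMr; last by rewrite mulr_gt0.
  move: hN2; rewrite !natrM => hN2; nra.
move=> _ _; rewrite gt0_muley ?leey // lte_fin ltr0n; lia.
Qed.

Lemma case_m0 (R : realType) (A : finType) (Xj : set (int -> A)) :
  Xj !=set0 -> boshernitzan R (mblock 0 @` Xj).
Proof.
move=> [x0 Xjx0].
have all_eq : forall y z : int -> 0.-tuple A, y = z.
  by move=> y z; apply/funext => k; rewrite (tuple0 (y k)) (tuple0 (z k)).
exists [tuple].
pose P := Probability.clone _ _ _
  (@dirac _ (seqspace ([tuple] : 0.-tuple A)) (fun _ => [tuple]) R) _.
exists P; split; [|split].
- rewrite (_ : mblock 0 @` Xj = setT) ?probability_setT //.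
  by apply/seteqP; split => y // _; exists x0 => //; exact: all_eq.
- move=> B mB; congr (P _); apply/seteqP; split => y;
    by rewrite /preimage /= (all_eq (sshift y) y).
- apply: (@limsup_pos_of _ _ 1) => // K; exists K.+1 => //.
  have h1 : (1 <= ereal_inf [set P (@cyl _ ([tuple] : 0.-tuple A) K.+1 u) | u in
                @language _ (mblock 0 @` Xj) K.+1])%E.
    apply: le_ereal_inf_tmp => _ [w _ <-].
    rewrite (_ : @cyl _ _ _ w = setT) ?probability_setT //.
    apply/seteqP; split => y // _; rewrite /cyl /=.
    by apply: eq_from_tnth => i; rewrite (tuple0 (tnth _ i)) (tuple0 (tnth w i)).
  apply: (le_trans _ (lee_wpmul2l _ h1)); last by rewrite lee_fin ler0n.
  by rewrite mule1 lee_fin ler1n.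
Qed.

Theorem lemma3p11 (R : realType) (A : finType) (X : set (int -> A)) (m : nat) :
  minimal_subshift X -> boshernitzan R X ->
  forall Xj : set (int -> A),
    minimal_component (iter m sshift) X Xj ->
    boshernitzan R (mblock m @` Xj).
Proof.
move=> mX [a [nu [nuX [nuinv nulim]]]] Xj mc.
have [XjX [[[x0 Xjx0] [clj hj]] mn]] := mc.
have [[_ [clX _]] _] := mX.
have [m0|mpos] := posnP m.
  by subst m; apply: case_m0; exists x0.
have iX := invX mX.
have ijm := invXj mc.
have [L hL] := clopen mpos mX mc.
have mXj : measurable (Xj : set (seqspace a)) := meas_closed clj.
have mXX : measurable (X : set (seqspace a)) := meas_closed clX.
pose I (N : nat) := ereal_inf [set nu (@cyl _ a N u) | u in @language _ X N].
have I0 N : (0 <= I N)%E.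
  by apply: le_ereal_inf_tmp => _ [u _ <-]; exact: measure_ge0.
have Imono N N' : (N <= N')%N -> (I N' <= I N)%E.
  move=> NN'; apply: le_ereal_inf_tmp => _ [u [y Xy [k wk]] <-].
  apply: (@le_trans _ _ (nu (@cyl _ a N' (window N' y k)))).
    by apply: ereal_inf_lbound; exists (window N' y k) => //; exists y => //; exists k.
  apply: le_measure; rewrite ?inE; [exact: meas_cyl|exact: meas_cyl|].
  move=> x; rewrite /cyl /= => e; rewrite -wk.
  apply: eq_from_tnth => j; rewrite !tnth_mktuple.
  have jN' : (j < N')%N by apply: leq_trans (ltn_ord j) NN'.
  by have := congr1 (fun t => tnth t (Ordinal jN')) e; rewrite !tnth_mktuple.
have Ipos N : (0 < I N)%E.
  have [eps e0 h] := limsup_pos_ex nulim; have [N1 NN1 h1] := h N.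
  apply: (lt_le_trans _ (Imono _ _ NN1)).
  rewrite lt0e I0 andbT; apply/eqP => e; move: h1 => /=; rewrite -/(I N1) e mule0 lte_fin.
  lra.
have nuXc (E : set (seqspace a)) : measurable E -> (nu E <= nu (E `&` X))%E.
  move=> mE.
  apply: (@le_trans _ _ (nu ((E `&` X) `|` ~` X))).
    apply: le_measure; rewrite ?inE.
    - exact: mE.
    - by apply: measurableU; [exact: measurableI|exact: measurableC].
    - by move=> x Ex; case: (pselect (X x)) => h; [left|right].
  have nc : nu (~` X) = 0%E by rewrite probability_setC // nuX subee.
  apply: (le_trans (measureU2 _ _ _)); [exact: measurableI|exact: measurableC|].
  rewrite [X in (_ + X <= _)%E](_ : _ = 0%E); first by rewrite adde0.
  exact: nc.
pose N' (n : nat) := (n * m + L.*2.+1)%N.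
pose C (y : int -> A) (n : nat) : set (seqspace a) :=
  [set x : seqspace a | window (N' n) x (- L%:Z) = window (N' n) y (- L%:Z)].
have key (y : int -> A) (n : nat) : Xj y ->
    (I (N' n) <= nu (C y n `&` X))%E /\
    forall x, (C y n `&` X) x -> Xj x /\
      (forall i : int, - L%:Z <= i < n%:Z * m%:Z + L%:Z + 1 -> x i = y i).
  move=> Xjy.
  have agr x : C y n x -> forall i : int, - L%:Z <= i < n%:Z * m%:Z + L%:Z + 1 -> x i = y i.
    move=> e i hi; rewrite (window_agree e (i := i)); first by congr (y _); lia.
    by rewrite /N'; lia.
  split; last first.
    move=> x [Cx Xx]; split; last exact: agr.
    apply: (hL x y Xx Xjy) => i hi; apply: agr => //; nia.
  pose u := window (N' n) y (- L%:Z).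
  apply: (@le_trans _ _ (nu (@cyl _ a (N' n) u))).
    by apply: ereal_inf_lbound; exists u => //; exists y; [exact: XjX|exists (- L%:Z)].
  have -> : @cyl _ a (N' n) u = sh L%:Z @^-1` C y n.
    by apply/seteqP; split => x; rewrite /cyl /C /preimage /= window_sh addNr.
  rewrite inv_nu //; last exact: meas_cyl.
  by apply: nuXc; exact: meas_cyl.
have nuXj_pos : (0 < nu Xj)%E.
  have [h1 h2] := key x0 0%N Xjx0.
  apply: (lt_le_trans (Ipos (N' 0%N))); apply: (le_trans h1).
  apply: le_measure; rewrite ?inE //.
    by apply: measurableI => //; exact: meas_cyl.
  by move=> x /h2 [].
have nuXj_le1 : (nu Xj <= 1)%E by apply: probability_le1.
pose c := fine (nu Xj).
have hc : nu Xj = c%:E by rewrite /c fineK // ge0_fin_numE ?(ltW nuXj_pos) // (le_lt_trans nuXj_le1) ?ltey.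
have c0 : 0 < c by rewrite -lte_fin -hc.
have c1 : c <= 1 by rewrite -lee_fin -hc.
pose a' : m.-tuple A := [tuple a | i < m].
have mmb := @meas_mblock A a m a'.
pose P0 := Probability.clone _ _ _
  (@dirac _ (seqspace a') (fun _ => a') R) _.
pose mu := Probability.clone _ _ _ (mnormalize (pfr nu mXj mmb) P0) _.
have muE U : mu U = (nu (mblock m @^-1` U `&` Xj) * (c^-1)%:E)%E.
  rewrite /= /mnormalize /pfr /= preimage_setT setTI hc.
  by rewrite ifF //; apply/negbTE; rewrite negb_or eqe (gt_eqF c0).
exists a', mu; split; [|split].
- rewrite muE (_ : _ `&` _ = Xj); last first.
    by apply/seteqP; split => x; [case|move=> Xjx; split => //; exists x].
  by rewrite hc -EFinM divff // gt_eqF.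
- move=> B mB; rewrite !muE; congr (_ * _)%E.
  rewrite (_ : _ `&` _ = sh m%:Z @^-1` (mblock m @^-1` B `&` Xj)).
    rewrite inv_nu //; apply: measurableI => //.
    by have := mmb measurableT _ mB; rewrite setTI.
  have im := ijm 1; rewrite mul1r in im.
  apply/seteqP; split => x; rewrite /preimage /= mblock_sh1.
    by move=> [Bx Xx]; split => //; exact: (im x).2.
  by move=> [Bx Xx]; split => //; exact: (im x).1.
- apply: (@transfer _ I _ m L.*2.+1 mpos I0 Imono) => //.
  move=> n; apply: lee_wpmul2l; first by rewrite lee_fin ler0n.
  apply: le_ereal_inf_tmp => _ [w [_ [x1 Xjx1 <-] [k wk]] <-].
  pose y := sh (k * m%:Z) x1.
  have Xjy : Xj y by apply/(ijm k).
  have wy : window n (mblock m y) 0 = w by rewrite /y mblock_sh window_sh add0r.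
  have [h1 h2] := key y n Xjy.
  rewrite muE; apply: (le_trans h1).
  apply: (@le_trans _ _ (nu (mblock m @^-1` (@cyl _ a' n w) `&` Xj))).
    apply: le_measure; rewrite ?inE.
    - by apply: measurableI => //; exact: meas_cyl.
    - apply: measurableI => //.
      by have := mmb measurableT _ (@meas_cyl _ a' n w 0); rewrite setTI.
    move=> x Cx; have [Xjx agx] := h2 x Cx; split => //.
    rewrite /cyl /preimage /= -wy.
    apply: agree_window => j jb; rewrite /mblock.
    apply: agree_window => i ib; rewrite agx; first by congr (y _); lia.
    nia.
  apply: lee_pemulr; first exact: measure_ge0.
  by rewrite lee_fin invf_ge1.
Qed.
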